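(* The canonical model $\langle W,\mathcal{N},V\rangle$ for IML1 is an nIML1-model.
   Context: Formulas are built from a denumerable set $PV$ of propositional variables and $\bot$ using $\land,\lor,\rightarrow$ and unary $\Delta$. The axioms of IML1 are all instances of the axiom schemes of intuitionistic propositional calculus, of K: $\Delta(\varphi\rightarrow\psi)\rightarrow(\Delta\varphi\rightarrow\Delta\psi)$ and of T: $\Delta\varphi\rightarrow\varphi$. An IML1-theory is a set of formulas containing all axioms and closed under modus ponens and under RN ($\varphi\in w\Rightarrow\Delta\varphi\in w$). A theory $w$ is prime if $\bot\notin w$ and $\varphi\lor\psi\in w$ iff ($\varphi\in w$ or $\psi\in w$). Canonical model: $W$ = set of prime IML1-theories; $A_w=\{v\in W:w\subseteq v\}$, $B_w=\{v\in W:\forall\varphi\,(\Delta\varphi\in w\Rightarrow\varphi\in v)\}$, $\mathcal{N}_w=\{X\subseteq W: A_w\subseteq X\subseteq B_w\}$; $V(q)=\{w\in W:q\in w\}$. An nIML1-model is a triple $\langle W,\mathcal{N},V\rangle$ with $W\neq\emptyset$, $\mathcal{N}:W\to P(P(W))$ satisfying for all $w$: (a) $w\in\bigcap\mathcal{N}_w$; (b) $\bigcap\mathcal{N}_w\in\mathcal{N}_w$; (c) $u\in\bigcap\mathcal{N}_w\Rightarrow\bigcap\mathcal{N}_u\subseteq\bigcap\mathcal{N}_w$; (d) $\bigcap\mathcal{N}_w\subseteq X\subseteq\bigcup\mathcal{N}_w\Rightarrow X\in\mathcal{N}_w$; (e) $u\in\bigcap\mathcal{N}_w\Rightarrow\bigcup\mathcal{N}_u\subseteq\bigcup\mathcal{N}_w$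 (where $\bigcap\mathcal{N}_w$, $\bigcup\mathcal{N}_w$ are the intersection and union of the family $\mathcal{N}_w$), and $V:PV\to P(W)$ with $w\in V(q)\Rightarrow\bigcap\mathcal{N}_w\subseteq V(q)$. *)

(* Defs.v *)
Inductive form : Type :=
| Var : nat -> form
| Bot : form
| And : form -> form -> form
| Or  : form -> form -> form
| Imp : form -> form -> form
| Dl  : form -> form.

Inductive IML1_axiom : form -> Prop :=
| ax_K1 : forall p q, IML1_axiom (Imp p (Imp q p))
| ax_S  : forall p q r, IML1_axiom (Imp (Imp p (Imp q r)) (Imp (Imp p q) (Imp p r)))
| ax_AndE1 : forall p q, IML1_axiom (Imp (And p q) p)
| ax_AndE2 : forall p q, IML1_axiom (Imp (And p q) q)
| ax_AndI  : forall p q, IML1_axiom (Imp p (Imp q (And p q)))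
| ax_OrI1  : forall p q, IML1_axiom (Imp p (Or p q))
| ax_OrI2  : forall p q, IML1_axiom (Imp q (Or p q))
| ax_OrE   : forall p q r, IML1_axiom (Imp (Imp p r) (Imp (Imp q r) (Imp (Or p q) r)))
| ax_Bot   : forall p, IML1_axiom (Imp Bot p)
| ax_K     : forall p q, IML1_axiom (Imp (Dl (Imp p q)) (Imp (Dl p) (Dl q)))
| ax_T     : forall p, IML1_axiom (Imp (Dl p) p).

Definition IML1_theory (w : form -> Prop) : Prop :=
  (forall p, IML1_axiom p -> w p) /\
  (forall p q, w (Imp p q) -> w p -> w q) /\
  (forall p, w p -> w (Dl p)).

Definition prime_theory (w : form -> Prop) : Prop :=
  IML1_theory w /\ ~ w Bot /\ (forall p q, w (Or p q) <-> (w p \/ w q)).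

Section Models.
Variable W : Type.

Definition bigcapN (F : (W -> Prop) -> Prop) : W -> Prop :=
  fun u => forall X, F X -> X u.
Definition bigcupN (F : (W -> Prop) -> Prop) : W -> Prop :=
  fun u => exists X, F X /\ X u.

Definition nIML1_model (N : W -> (W -> Prop) -> Prop) (V : nat -> W -> Prop) : Prop :=
  inhabited W /\
  (forall w,
     bigcapN (N w) w /\
     N w (bigcapN (N w)) /\
     (forall u, bigcapN (N w) u ->
                  forall v, bigcapN (N u) v -> bigcapN (N w) v) /\
     (forall X : W -> Prop,
                  (forall v, bigcapN (N w) v -> X v) ->
                  (forall v, X v -> bigcupN (N w) v) -> N w X) /\
     (forall u, bigcapN (N w) u ->
                  forall v, bigcupN (N u) v -> bigcupN (N w) v)) /\
  (forall q w, V q w -> forall u, bigcapN (N w) u -> V q u).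
End Models.
Arguments bigcapN {W}.
Arguments bigcupN {W}.

Definition canW : Type := { w : form -> Prop | prime_theory w }.

Definition canA (w : canW) : canW -> Prop :=
  fun v => forall p, proj1_sig w p -> proj1_sig v p.
Definition canB (w : canW) : canW -> Prop :=
  fun v => forall p, proj1_sig w (Dl p) -> proj1_sig v p.
Definition canN (w : canW) : (canW -> Prop) -> Prop :=
  fun X => (forall v, canA w v -> X v) /\ (forall v, X v -> canB w v).
Definition canV (q : nat) : canW -> Prop :=
  fun w => proj1_sig w (Var q).

(* Main.v *)
Require Import Defs.
From Stdlib Require Import Bool.

Fixpoint ev (p : form) : bool :=
  match p with
  | Var _ => false
  | Bot => false
  | And a b => ev a && ev b
  | Or a b => ev a || ev b
  | Imp a b => implb (ev a) (ev b)
  | Dl a => ev a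
  end.

Lemma ev_prime : prime_theory (fun p => ev p = true).
Proof.
  split; [split; [|split]|split].
  - intros p H; destruct H; simpl;
      repeat match goal with |- context [ev ?x] => destruct (ev x) end; reflexivity.
  - intros p q H1 H2; simpl in H1; rewrite H2 in H1; exact H1.
  - intros p H; exact H.
  - simpl; discriminate.
  - intros p q; simpl; split.
    + intro H; apply orb_true_iff in H; exact H.
    + intro H; apply orb_true_iff; exact H.
Qed.

Lemma A_in_N (w : canW) : canN w (canA w).
Proof.
  split.
  - intros v H; exact H.
  - intros v H p Hp. apply H.
    destruct (proj2_sig w) as [[Ax [MP RN]] _].
    exact (MP _ _ (Ax _ (ax_T p)) Hp).
Qed.

Lemma cap_iff (w : canW) v : bigcapN (canN w) v <-> canA w v.
Proof.
  split.
  - intro H; apply H, A_in_N.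
  - intros H X [HX _]; auto.
Qed.

Lemma cup_B (w : canW) v : bigcupN (canN w) v -> canB w v.
Proof. intros [X [[_ HX] Hv]]; auto. Qed.

Theorem lemma4p3 : nIML1_model canW canN canV.
Proof.
  split; [|split].
  - constructor; exact (exist _ _ ev_prime).
  - intro w; split; [|split; [|split; [|split]]].
    + apply cap_iff; intros p Hp; exact Hp.
    + split.
      * intros v Hv; apply cap_iff; exact Hv.
      * intros v Hv p Hp; apply cap_iff in Hv. apply (proj2 (A_in_N w)); auto.
    + intros u Hu v Hv; apply cap_iff in Hu; apply cap_iff in Hv; apply cap_iff.
      intros p Hp; auto.
    + intros X H1 H2; split.
      * intros v Hv; apply H1, cap_iff, Hv.
      * intros v Hv; apply cup_B, H2, Hv.
    + intros u Hu v Hv. apply cap_iff in Hu. apply cup_B in Hv.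
      exists (canB w); split.
      * split.
        -- intros v' Hv'; apply (proj2 (A_in_N w)); exact Hv'.
        -- intros v' Hv'; exact Hv'.
      * intros p Hp; apply Hv, Hu, Hp.
  - intros q w Hq u Hu; apply cap_iff in Hu; apply Hu, Hq.
Qed.
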